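(* Let $\mathbb{V}=V\times\{0\}$ be a horizontal homogeneous subgroup of $\mathbb{H}^n$ with $k=\dim V$, and let $\pi_{\mathbb{V}^\perp}\colon\mathbb{H}^n\to\mathbb{V}^\perp$ be the projection associated with $\mathbb{H}^n=\mathbb{V}^\perp\ltimes\mathbb{V}$. Equip $\mathbb{H}^n$ with the Korányi metric and $\mathbb{V}^\perp$ with the Euclidean metric of $\mathbb{R}^{2n+1}$. Then $\pi_{\mathbb{V}^\perp}$ is locally David–Semmes $(k+1)$-regular, i.e. $(\mathbb{H}^n,(\mathbb{V}^\perp,d_{\mathbb{R}^{2n+1}}),\pi_{\mathbb{V}^\perp})$ is a $(k+1)$-foliation.
   Context: $\mathbb{H}^n=\mathbb{R}^{2n}\times\mathbb{R}$ with group law $(x,t)*(x',t')=(x+x',t+t'+2\omega(x,x'))$, $\omega(x,x')=\sum_{i=1}^n(x_{n+i}x'_i-x_ix'_{n+i})$, Korányi metric $d_{\mathbb{H}}(p,q)=\|p^{-1}*q\|_{\mathbb{H}}$, $\|(x,t)\|_{\mathbb{H}}=(|x|^4+t^2)^{1/4}$. Horizontal homogeneous subgroup: $\mathbb{V}=V\times\{0\}$ with $V\subseteq\mathbb{R}^{2n}$ a subspace on which $\omega\equiv0$; $\mathbb{V}^\perp=V^\perp\times\mathbb{R}$. Writing uniquely $p=p_{\mathbb{V}^\perp}*p_{\mathbb{V}}$, set $\pi_{\mathbb{V}^\perp}(p)=p_{\mathbb{V}^\perp}$; its fibers are the left cosets $a*\mathbb{V}$. A surjection $\pi\colon X\to W$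 between proper metric spaces is locally David–Semmes $s$-regular if for every compact $K\subseteq X$, $\pi|_K$ is Lipschitz and there are $C\ge1$, $r_0>0$ such that for every ball $B\subseteq W$ of radius $r<r_0$, $\pi^{-1}(B)\cap K$ can be covered by at most $Cr^{-s}$ balls in $X$ of radius $Cr$; $(X,W,\pi)$ is then an $s$-foliation. *)

(* Defs.v *)
From Stdlib Require Import Reals List.
From mathcomp Require Import ssreflect ssrfun ssrbool eqtype ssrnat seq
  choice fintype bigop.
Set Implicit Arguments.
Unset Strict Implicit.
Unset Printing Implicit Defensive.
Open Scope R_scope.

Definition vec (m : nat) := 'I_m -> R.

Definition rsum (m : nat) (f : 'I_m -> R) : R := \big[Rplus/R0]_(i < m) f i.

Definition vzero (m : nat) : vec m := fun _ => 0.
Definition vadd (m : nat) (x y : vec m) : vec m := fun j => x j + y j.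
Definition vscal (m : nat) (a : R) (x : vec m) : vec m := fun j => a * x j.
Definition vsub (m : nat) (x y : vec m) : vec m := fun j => x j - y j.
Definition inner (m : nat) (x y : vec m) : R := rsum (fun j => x j * y j).
Definition norm2 (m : nat) (x : vec m) : R := inner x x.

Definition lincomb (m k : nat) (c : 'I_k -> R) (b : 'I_k -> vec m) : vec m :=
  fun j => rsum (fun i => c i * b i j).

Definition is_subspace (m : nat) (V : vec m -> Prop) : Prop :=
  V (@vzero m) /\
  (forall x y, V x -> V y -> V (vadd x y)) /\
  (forall a x, V x -> V (vscal a x)).

Definition has_dim (m : nat) (V : vec m -> Prop) (k : nat) : Prop :=
  exists b : 'I_k -> vec m,
    (forall c : 'I_k -> R, lincomb c b = @vzero m -> forall i, c i = 0) /\
    (forall v, V v <-> exists c : 'I_k -> R, v = lincomb c b).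

Definition orth (m : nat) (V : vec m -> Prop) (x : vec m) : Prop :=
  forall v, V v -> inner x v = 0.

(* R^{2n} is represented as vec (n + n); coordinate i (< n) is [lshift n i],
   coordinate n+i is [rshift n i]. *)
Definition hpt (n : nat) := (vec (n + n) * R)%type.

Definition omega (n : nat) (x y : vec (n + n)) : R :=
  rsum (fun i : 'I_n =>
          x (rshift n i) * y (lshift n i) - x (lshift n i) * y (rshift n i)).

Definition hmul (n : nat) (p q : hpt n) : hpt n :=
  (vadd p.1 q.1, p.2 + q.2 + 2 * omega p.1 q.1).

Definition hinv (n : nat) (p : hpt n) : hpt n :=
  (fun j => - p.1 j, - p.2).

Definition koranyi (n : nat) (p : hpt n) : R :=
  sqrt (sqrt (norm2 p.1 ^ 2 + p.2 ^ 2)).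

Definition dH (n : nat) (p q : hpt n) : R := koranyi (hmul (hinv p) q).

Definition dE (n : nat) (p q : hpt n) : R :=
  sqrt (norm2 (vsub p.1 q.1) + (p.2 - q.2) ^ 2).

(* horizontal homogeneous subgroup: V subspace of R^{2n} with omega = 0 on V *)
Definition isotropic (n : nat) (V : vec (n + n) -> Prop) : Prop :=
  forall x y, V x -> V y -> omega x y = 0.

Definition Vperp (n : nat) (V : vec (n + n) -> Prop) (p : hpt n) : Prop :=
  orth V p.1.

(* pi is the projection pi_{V^perp}: p = pi(p) * p_V with pi(p) in V^perp and
   p_V in V x {0} (this decomposition is unique). *)
Definition is_Vperp_projection (n : nat) (V : vec (n + n) -> Prop)
  (pi : hpt n -> hpt n) : Prop :=
  forall p, Vperp V (pi p) /\ exists v, V v /\ p = hmul (pi p) (v, 0).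

Definition is_open {X : Type} (d : X -> X -> R) (U : X -> Prop) : Prop :=
  forall x, U x -> exists e, 0 < e /\ forall y, d x y < e -> U y.

Definition is_compact {X : Type} (d : X -> X -> R) (K : X -> Prop) : Prop :=
  forall (I : Type) (U : I -> X -> Prop),
    (forall i, is_open d (U i)) ->
    (forall x, K x -> exists i, U i x) ->
    exists l : list I, forall x, K x -> exists i, In i l /\ U i x.

Definition locally_DS_regular {X W : Type} (dX : X -> X -> R)
  (Wset : W -> Prop) (dW : W -> W -> R) (pi : X -> W) (s : R) : Prop :=
  (forall x, Wset (pi x)) /\
  (forall w, Wset w -> exists x, pi x = w) /\
  forall K : X -> Prop, is_compact dX K ->
    (exists L, forall x y, K x -> K y -> dW (pi x) (pi y) <= L * dX x y) /\
    exists C r0, 1 <= C /\ 0 < r0 /\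
      forall w r, Wset w -> 0 < r -> r < r0 ->
        exists l : list X,
          INR (length l) <= C * Rpower r (- s) /\
          forall x, K x -> dW (pi x) w < r ->
            exists y, In y l /\ dX x y < C * r.

Definition foliation {X W : Type} (dX : X -> X -> R)
  (Wset : W -> Prop) (dW : W -> W -> R) (pi : X -> W) (s : R) : Prop :=
  locally_DS_regular dX Wset dW pi s.

(* Main.v *)
Set Warnings "-all".
Require Import Defs.
From Stdlib Require Import Reals List Lra Lia Psatz.
From mathcomp Require Import ssreflect ssrfun ssrbool eqtype ssrnat seq
  choice fintype finfun bigop.
From mathcomp Require Import ssralg matrix mxalgebra.
From mathcomp Require Import Rstruct.
From Stdlib Require Import FunctionalExtensionality ZArith IndefiniteDescription.
Open Scope R_scope.
Set Implicit Arguments.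
Unset Strict Implicit.

Lemma rsum_ext m (f g : 'I_m -> R) : (forall i, f i = g i) -> rsum f = rsum g.
Proof. move=> H; rewrite /rsum; apply: eq_bigr => i _; exact: H. Qed.

Lemma rsum_add m (f g : 'I_m -> R) :
  rsum (fun i => f i + g i) = rsum f + rsum g.
Proof. by rewrite /rsum big_split. Qed.

Lemma rsum_scal m (a : R) (f : 'I_m -> R) :
  rsum (fun i => a * f i) = a * rsum f.
Proof.
rewrite /rsum; elim/big_ind2: _ => //.
- by rewrite Rmult_0_r.
- by move=> x1 x2 y1 y2 -> ->; rewrite Rmult_plus_distr_l.
Qed.

Lemma rsum_le m (f g : 'I_m -> R) : (forall i, f i <= g i) -> rsum f <= rsum g.
Proof.
move=> H; rewrite /rsum; elim/big_ind2: _ => //.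
- exact: Rle_refl.
- by move=> x1 x2 y1 y2 A B; apply: Rplus_le_compat.
Qed.

Lemma rsum_abs m (f : 'I_m -> R) : Rabs (rsum f) <= rsum (fun i => Rabs (f i)).
Proof.
rewrite /rsum; elim/big_ind2: _ => //.
- rewrite Rabs_R0; exact: Rle_refl.
- move=> x1 x2 y1 y2 A B.
  apply: Rle_trans (Rabs_triang _ _) _; exact: Rplus_le_compat.
- move=> i _; exact: Rle_refl.
Qed.

Lemma rsum_nonneg m (f : 'I_m -> R) : (forall i, 0 <= f i) -> 0 <= rsum f.
Proof.
move=> H; rewrite /rsum; elim/big_ind: _ => //.
- exact: Rle_refl.
- move=> x y A B; lra.
Qed.

Lemma rsum_recr m (f : 'I_m.+1 -> R) :
  rsum f = rsum (fun i : 'I_m => f (widen_ord (leqnSn m) i)) + f ord_max.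
Proof. rewrite /rsum big_ord_recr. reflexivity. Qed.

Lemma rsum0 (f : 'I_0 -> R) : rsum f = 0.
Proof. rewrite /rsum big_ord0. reflexivity. Qed.

Lemma rsum_const_le m (f : 'I_m -> R) c : (forall i, f i <= c) -> rsum f <= INR m * c.
Proof.
elim: m f => [|m IH] f H.
- rewrite rsum0 /=; lra.
- rewrite S_INR rsum_recr.
  have := IH (fun i => f (widen_ord (leqnSn m) i)) (fun i => H _).
  have := H ord_max. lra.
Qed.

Lemma term_le m (f : 'I_m -> R) j : (forall i, 0 <= f i) -> f j <= rsum f.
Proof.
move=> H.
have -> : rsum f = f j + \big[Rplus/R0]_(i < m | i != j) f i.
  rewrite /rsum (bigD1 j) //.
have : 0 <= \big[Rplus/R0]_(i < m | i != j) f i.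
  elim/big_ind: _ => //; [exact: Rle_refl| move=> x y A B; lra].
lra.
Qed.

Lemma rsum_split n (f : 'I_(n + n) -> R) :
  rsum f = rsum (fun i => f (lshift n i)) + rsum (fun i => f (rshift n i)).
Proof. by rewrite /rsum big_split_ord. Qed.

Lemma rsum_opp m (f : 'I_m -> R) : rsum (fun i => - f i) = - rsum f.
Proof.
have -> : - rsum f = (-1) * rsum f by ring.
rewrite -rsum_scal; apply: rsum_ext => i; ring.
Qed.

Lemma rsum_sub m (f g : 'I_m -> R) :
  rsum (fun i => f i - g i) = rsum f - rsum g.
Proof.
rewrite /Rminus -rsum_opp -rsum_add. by apply: rsum_ext.
Qed.

Lemma Rabs2 a : Rabs (2 * a) = 2 * Rabs a.
Proof. rewrite Rabs_mult (Rabs_right 2) //; lra. Qed.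

Lemma sqabs a : Rabs a * Rabs a = a * a.
Proof. by rewrite -Rabs_mult Rabs_right //; nra. Qed.

Definition S1 m (x : vec m) : R := rsum (fun j => Rabs (x j)).

Lemma norm2_nonneg m (x : vec m) : 0 <= norm2 x.
Proof. apply: rsum_nonneg => i; nra. Qed.

Lemma coord_sq_le m (x : vec m) j : x j * x j <= norm2 x.
Proof. rewrite /norm2 /inner. move: (@term_le _ (fun j => x j * x j) j) => /=; apply => i; nra. Qed.

Lemma S1_nonneg m (x : vec m) : 0 <= S1 x.
Proof. apply: rsum_nonneg => i; exact: Rabs_pos. Qed.

Lemma coord_le_S1 m (x : vec m) j : Rabs (x j) <= S1 x.
Proof. move: (@term_le _ (fun j => Rabs (x j)) j) => /=; apply => i; exact: Rabs_pos. Qed.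

Lemma norm2_le_S1sq m (x : vec m) : norm2 x <= S1 x * S1 x.
Proof.
rewrite /norm2 /inner {2}/S1 -rsum_scal.
apply: rsum_le => i.
have A := coord_le_S1 x i. have B := Rabs_pos (x i).
have -> : x i * x i = Rabs (x i) * Rabs (x i).
  rewrite -Rabs_mult Rabs_right //; nra.
nra.
Qed.

Lemma S1_bound m (x : vec m) c : (forall j, Rabs (x j) <= c) -> S1 x <= INR m * c.
Proof. move=> H; exact: rsum_const_le. Qed.

Lemma abs_le_of_sq a d : 0 <= d -> a * a <= d * d -> Rabs a <= d.
Proof.
move=> Hd H.
have E : Rabs a * Rabs a = a * a by rewrite -Rabs_mult Rabs_right //; nra.
have := Rabs_pos a. nra.
Qed.

Lemma coord_le_norm m (x : vec m) d j : 0 <= d -> norm2 x <= d * d -> Rabs (x j) <= d.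
Proof. move=> Hd H; apply: abs_le_of_sq => //; have := coord_sq_le x j; lra. Qed.

Lemma inner_sym m (x y : vec m) : inner x y = inner y x.
Proof. apply: rsum_ext => i; ring. Qed.

Lemma norm2_vadd m (u v : vec m) :
  norm2 (vadd u v) = norm2 u + 2 * inner u v + norm2 v.
Proof.
rewrite /norm2 /inner -rsum_scal -!rsum_add; apply: rsum_ext => i; rewrite /vadd; ring.
Qed.

Lemma inner_subl m (x y z : vec m) : inner (vsub x y) z = inner x z - inner y z.
Proof. rewrite /inner -rsum_sub; apply: rsum_ext => i; rewrite /vsub; ring. Qed.

Lemma pyth m (u v : vec m) : inner u v = 0 ->
  norm2 u <= norm2 (vadd u v) /\ norm2 v <= norm2 (vadd u v).
Proof.
move=> H; rewrite norm2_vadd H.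
have := norm2_nonneg u; have := norm2_nonneg v; lra.
Qed.

Lemma norm2_vsub_sym m (x y : vec m) : norm2 (vsub x y) = norm2 (vsub y x).
Proof. apply: rsum_ext => i; rewrite /vsub; ring. Qed.

Lemma omega_bound n (x y : vec (n + n)) cx cy :
  (forall j, Rabs (x j) <= cx) -> (forall j, Rabs (y j) <= cy) ->
  Rabs (omega x y) <= 2 * INR n * (cx * cy).
Proof.
move=> Hx Hy.
apply: Rle_trans (rsum_abs _) _.
have -> : 2 * INR n * (cx * cy) = INR n * (2 * (cx * cy)) by ring.
apply: rsum_const_le => i.
have A1 := Hx (rshift n i); have A2 := Hx (lshift n i).
have B1 := Hy (rshift n i); have B2 := Hy (lshift n i).
have P1 := Rabs_pos (x (rshift n i)); have P2 := Rabs_pos (x (lshift n i)).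
have Q1 := Rabs_pos (y (rshift n i)); have Q2 := Rabs_pos (y (lshift n i)).
apply: Rle_trans (Rabs_triang _ _) _.
rewrite Rabs_Ropp !Rabs_mult.
have : Rabs (x (rshift n i)) * Rabs (y (lshift n i)) <= cx * cy.
  apply: Rmult_le_compat => //.
have : Rabs (x (lshift n i)) * Rabs (y (rshift n i)) <= cx * cy.
  apply: Rmult_le_compat => //.
lra.
Qed.

Lemma omega_self n (x : vec (n + n)) : omega x x = 0.
Proof.
rewrite /omega.
have -> : 0 = rsum (fun i : 'I_n => 0 * 0) by rewrite rsum_scal; ring.
apply: rsum_ext => i; ring.
Qed.

Lemma omega_addl n (x y z : vec (n + n)) : omega (vadd x y) z = omega x z + omega y z.
Proof. rewrite /omega -rsum_add; apply: rsum_ext => i; rewrite /vadd; ring. Qed.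
Lemma omega_addr n (x y z : vec (n + n)) : omega z (vadd x y) = omega z x + omega z y.
Proof. rewrite /omega -rsum_add; apply: rsum_ext => i; rewrite /vadd; ring. Qed.
Lemma omega_subl n (x y z : vec (n + n)) : omega (vsub x y) z = omega x z - omega y z.
Proof. rewrite /omega -rsum_sub; apply: rsum_ext => i; rewrite /vsub; ring. Qed.
Lemma omega_subr n (x y z : vec (n + n)) : omega z (vsub x y) = omega z x - omega z y.
Proof. rewrite /omega -rsum_sub; apply: rsum_ext => i; rewrite /vsub; ring. Qed.
Lemma omega_anti n (x y : vec (n + n)) : omega x y = - omega y x.
Proof. rewrite /omega -rsum_opp; apply: rsum_ext => i; ring. Qed.
Lemma omega_neg n (x y : vec (n + n)) : omega (fun j => - x j) y = - omega x y.
Proof. rewrite /omega -rsum_opp; apply: rsum_ext => i; ring. Qed.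

Lemma sqrt_sq_le a b : 0 <= a -> a * a <= b -> a <= sqrt b.
Proof.
move=> Ha H. rewrite -(sqrt_square a) //. apply: sqrt_le_1_alt. exact: H.
Qed.

Lemma kor_lower n (p : hpt n) :
  0 <= koranyi p /\ norm2 p.1 <= koranyi p * koranyi p /\
  Rabs p.2 <= koranyi p * koranyi p.
Proof.
rewrite /koranyi.
set X := norm2 p.1 ^ 2 + p.2 ^ 2.
have HX : 0 <= X by rewrite /X; nra.
have HsX : 0 <= sqrt X by apply: sqrt_pos.
rewrite sqrt_sqrt //.
have HN := norm2_nonneg p.1.
split; first exact: sqrt_pos.
split.
- apply: sqrt_sq_le => //; rewrite /X; nra.
- apply: sqrt_sq_le; first exact: Rabs_pos.
  rewrite -Rabs_mult Rabs_right; rewrite /X; nra.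
Qed.

Lemma kor_upper n (p : hpt n) B : 0 <= B -> norm2 p.1 <= B * B ->
  Rabs p.2 <= B * B -> koranyi p <= 2 * B.
Proof.
move=> HB H1 H2.
have HN := norm2_nonneg p.1.
have E : Rabs p.2 * Rabs p.2 = p.2 * p.2 by rewrite -Rabs_mult Rabs_right; nra.
have HA := Rabs_pos p.2.
rewrite /koranyi.
have S1' : sqrt (norm2 p.1 ^ 2 + p.2 ^ 2) <= (2 * B) * (2 * B).
  rewrite -(sqrt_square ((2 * B) * (2 * B))); last nra.
  apply: sqrt_le_1_alt.
  have : norm2 p.1 * norm2 p.1 <= (B * B) * (B * B) by apply: Rmult_le_compat.
  have : p.2 * p.2 <= (B * B) * (B * B) by rewrite -E; apply: Rmult_le_compat.
  nra.
rewrite -(sqrt_square (2 * B)); last lra.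
exact: sqrt_le_1_alt.
Qed.

Lemma hinv_mul1 n (x y : hpt n) : (hmul (hinv x) y).1 = vsub y.1 x.1.
Proof. apply: functional_extensionality => j; rewrite /= /vadd /vsub; ring. Qed.

Lemma hinv_mul2 n (x y : hpt n) :
  (hmul (hinv x) y).2 = y.2 - x.2 - 2 * omega x.1 y.1.
Proof. rewrite /= omega_neg; ring. Qed.

Lemma dH_lower n (x y : hpt n) :
  0 <= dH x y /\ norm2 (vsub y.1 x.1) <= dH x y * dH x y /\
  Rabs (y.2 - x.2 - 2 * omega x.1 y.1) <= dH x y * dH x y.
Proof. rewrite /dH -hinv_mul1 -hinv_mul2; exact: kor_lower. Qed.

Lemma dH_upper n (x y : hpt n) B : 0 <= B -> norm2 (vsub y.1 x.1) <= B * B ->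
  Rabs (y.2 - x.2 - 2 * omega x.1 y.1) <= B * B -> dH x y <= 2 * B.
Proof. rewrite /dH -hinv_mul1 -hinv_mul2; exact: kor_upper. Qed.

Lemma nat_between y : 0 <= y -> exists N : nat, y <= INR N /\ INR N <= y + 1.
Proof.
move=> Hy. have [A B] := archimed y.
have Hz : (0 < up y)%Z by apply: lt_0_IZR; lra.
exists (Z.to_nat (up y)).
rewrite INR_IZR_INZ Z2Nat.id; [lra | lia].
Qed.

Lemma S1_tri m (x y : vec m) : S1 y <= S1 x + S1 (vsub y x).
Proof.
rewrite /S1 -rsum_add; apply: rsum_le => j.
have -> : y j = x j + vsub y x j by rewrite /vsub; ring.
exact: Rabs_triang.
Qed.

Definition Fb n (y : hpt n) := S1 y.1 + Rabs y.2.

Lemma Fb_cont n (x y : hpt n) : dH x y <= 1 ->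
  Fb y <= Fb x + (INR (n + n) + 1 + 4 * INR n * S1 x.1) * dH x y.
Proof.
move=> Hd1.
have [Hd [H1 H2]] := dH_lower x y.
set d := dH x y in Hd Hd1 H1 H2 *.
have Hc : forall j, Rabs (vsub y.1 x.1 j) <= d.
  move=> j; exact: coord_le_norm.
have HS := S1_bound Hc.
have HT := S1_tri x.1 y.1.
have Hx : forall j, Rabs (x.1 j) <= S1 x.1 by move=> j; exact: coord_le_S1.
have Hw := omega_bound Hx Hc.
have E : omega x.1 y.1 = omega x.1 (vsub y.1 x.1) by rewrite omega_subr omega_self; ring.
rewrite /Fb.
have : Rabs y.2 <= Rabs x.2 + Rabs (y.2 - x.2 - 2 * omega x.1 y.1) + 2 * Rabs (omega x.1 y.1).
  have -> : y.2 = x.2 + (y.2 - x.2 - 2 * omega x.1 y.1) + 2 * omega x.1 y.1 by ring.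
  have -> : x.2 + (y.2 - x.2 - 2 * omega x.1 y.1) + 2 * omega x.1 y.1 - x.2 - 2 * omega x.1 y.1
     = y.2 - x.2 - 2 * omega x.1 y.1 by ring.
  apply: Rle_trans (Rabs_triang _ _) _.
  rewrite Rabs_mult (Rabs_right 2); last lra.
  have := Rabs_triang x.2 (y.2 - x.2 - 2 * omega x.1 y.1). lra.
move=> Hy2.
have Hdd : d * d <= d by nra.
rewrite E in H2 Hy2.
have := S1_nonneg x.1.
lra.
Qed.

Lemma K_bounded n (K : hpt n -> Prop) : is_compact (@dH n) K ->
  exists M, 0 <= M /\ forall x, K x -> Fb x <= M.
Proof.
move=> HK.
have Hop : forall i : nat, is_open (@dH n) (fun y => Fb y < INR i).
  move=> i x Hx.
  set c0 := INR (n + n) + 1 + 4 * INR n * S1 x.1.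
  have Hc0 : 0 < c0.
    rewrite /c0; have := pos_INR (n + n); have := pos_INR n; have := S1_nonneg x.1; nra.
  set mu := INR i - Fb x.
  have Hmu : 0 < mu by rewrite /mu; lra.
  exists (Rmin 1 (mu / (2 * c0))); split.
    apply: Rmin_glb_lt; first lra.
    apply: Rdiv_lt_0_compat; lra.
  move=> y Hy.
  have Hy1 : dH x y <= 1 by have := Rmin_l 1 (mu / (2 * c0)); lra.
  have Hy2 : dH x y <= mu / (2 * c0) by have := Rmin_r 1 (mu / (2 * c0)); lra.
  have := Fb_cont Hy1. fold c0.
  have : c0 * dH x y <= mu / 2.
    have -> : mu / 2 = c0 * (mu / (2 * c0)) by field; lra.
    apply: Rmult_le_compat_l; lra.
  rewrite /mu in Hmu *. lra.
have Hcov : forall x, K x -> exists i : nat, Fb x < INR i.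
  move=> x _. have [N HN] := INR_unbounded (Fb x). by exists N.
have [l Hl] := HK nat _ Hop Hcov.
exists (fold_right (fun i acc => INR i + acc) 0 l).
have Hpos : forall l0 : list nat, 0 <= fold_right (fun i acc => INR i + acc) 0 l0.
  elim => [|a l0 IH] /=; [lra | have := pos_INR a; lra].
split; first exact: Hpos.
move=> x Kx. have [i [Hi Hx]] := Hl x Kx.
suff : INR i <= fold_right (fun i acc => INR i + acc) 0 l by lra.
elim: l Hi {Hl} => [|a l0 IH] //= [->|Hi].
- have := Hpos l0; lra.
- have := IH Hi; have := pos_INR a; lra.
Qed.

Lemma Fb_facts n (x : hpt n) M : Fb x <= M ->
  0 <= M /\ (forall j, Rabs (x.1 j) <= M) /\ Rabs x.2 <= M /\ norm2 x.1 <= M * M.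
Proof.
rewrite /Fb => H.
have H1 := S1_nonneg x.1. have H2 := Rabs_pos x.2.
split; first lra.
split; first by move=> j; have := coord_le_S1 x.1 j; lra.
split; first lra.
have := norm2_le_S1sq x.1. nra.
Qed.

Section Decomp.
Variables (n : nat) (V : vec (n + n) -> Prop) (pi : hpt n -> hpt n).
Hypothesis HV : is_subspace V.
Hypothesis HP : is_Vperp_projection V pi.

Lemma V_sub v v' : V v -> V v' -> V (vsub v v').
Proof.
case: HV => _ [Hadd Hsc] Hv Hv'.
have -> : vsub v v' = vadd v (vscal (-1) v').
  apply: functional_extensionality => j; rewrite /vsub /vadd /vscal; ring.
apply: Hadd => //; exact: Hsc.
Qed.

Lemma orth_sub a a' : orth V a -> orth V a' -> orth V (vsub a a').
Proof. move=> Ha Ha' w Hw; rewrite inner_subl Ha // Ha' //; ring. Qed.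

Lemma decomp x : exists v, V v /\ x.1 = vadd (pi x).1 v /\
  (pi x).2 = x.2 - 2 * omega x.1 v /\ orth V (pi x).1.
Proof.
have [Ha [v [Hv Ex]]] := HP x.
exists v; split => //.
have E1 : x.1 = vadd (pi x).1 v by rewrite {1}Ex.
have E2 : x.2 = (pi x).2 + 0 + 2 * omega (pi x).1 v by rewrite {1}Ex.
split => //; split => //.
rewrite E2 E1 omega_addl omega_self; ring.
Qed.

Lemma decomp_norm x v : V v -> x.1 = vadd (pi x).1 v -> orth V (pi x).1 ->
  norm2 (pi x).1 <= norm2 x.1 /\ norm2 v <= norm2 x.1.
Proof. move=> Hv E Ha; rewrite E; apply: pyth; exact: Ha. Qed.

Lemma lip x y M : Fb x <= M -> Fb y <= M ->
  dE (pi x) (pi y) <= (1 + (2 * ((1 + INR (n + n)) * (1 + 2 * M)) + 12 * INR n * M)) * dH x y.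
Proof.
move=> Fx Fy.
have [HM [Cx [Ax Nx]]] := Fb_facts Fx.
have [_ [Cy [Ay Ny]]] := Fb_facts Fy.
have [v [Hv [E1 [E2 Ha]]]] := decomp x.
have [v' [Hv' [E1' [E2' Ha']]]] := decomp y.
have [Na Nv] := decomp_norm Hv E1 Ha.
have [Na' Nv'] := decomp_norm Hv' E1' Ha'.
have [Hd [H1 H2]] := dH_lower x y.
set d := dH x y in Hd H1 H2 *.
set N := INR (n + n).
have HN : 0 <= N by apply: pos_INR.
have Hn : 0 <= INR n by apply: pos_INR.
set B := (1 + N) * (1 + 2 * M).
have HdB : d <= 2 * B.
  apply: dH_upper.
  - rewrite /B; nra.
  - have : norm2 (vsub y.1 x.1) <= N * ((2 * M) * (2 * M)).
      apply: rsum_const_le => j; rewrite /vsub.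
      have := Cx j; have := Cy j.
      have := Rabs_triang (y.1 j) (- x.1 j). rewrite Rabs_Ropp.
      move=> T A B'.
      have Hj : Rabs (y.1 j - x.1 j) <= 2 * M by rewrite /Rminus; lra.
      rewrite -sqabs.
      have := Rabs_pos (y.1 j - x.1 j). nra.
    move=> HH. rewrite /B. nra.
  - have Hw := omega_bound Cx Cy.
    have : Rabs (y.2 - x.2 - 2 * omega x.1 y.1) <= Rabs y.2 + Rabs x.2 + 2 * Rabs (omega x.1 y.1).
      have := Rabs_triang (y.2 - x.2) (- (2 * omega x.1 y.1)).
      have := Rabs_triang y.2 (- x.2).
      rewrite !Rabs_Ropp Rabs_mult (Rabs_right 2); last lra.
      rewrite /Rminus. lra.
    have EN : 2 * INR n = N by rewrite /N plus_INR; ring.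
    rewrite EN in Hw. move=> HH. rewrite /B. nra.
have Eh : vsub x.1 y.1 = vadd (vsub (pi x).1 (pi y).1) (vsub v v').
  apply: functional_extensionality => j; rewrite E1 E1' /vsub /vadd; ring.
have Hin : inner (vsub (pi x).1 (pi y).1) (vsub v v') = 0.
  apply: (orth_sub Ha Ha'); exact: V_sub.
have [P1 P2] := pyth Hin.
rewrite -Eh in P1 P2.
have Nh : norm2 (vsub x.1 y.1) <= d * d by rewrite norm2_vsub_sym.
have Hdv : forall j, Rabs (vsub v' v j) <= d.
  move=> j; apply: coord_le_norm => //. rewrite (norm2_vsub_sym v'); lra.
have Hdh : forall j, Rabs (vsub y.1 x.1 j) <= d.
  move=> j; exact: coord_le_norm.
have Cv' : forall j, Rabs (v' j) <= M.
  move=> j; apply: coord_le_norm => //; lra.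
have Ev : (pi x).2 - (pi y).2 = - (y.2 - x.2 - 2 * omega x.1 y.1)
   - 2 * omega x.1 (vsub y.1 x.1) + 2 * omega (vsub y.1 x.1) v'
   + 2 * omega x.1 (vsub v' v).
  rewrite E2 E2' !omega_subr !omega_subl omega_self; ring.
have W1 := omega_bound Cx Hdh.
have W2 := omega_bound Hdh Cv'.
have W3 := omega_bound Cx Hdv.
set L1 := 2 * B + 12 * INR n * M.
have Hvert : Rabs ((pi x).2 - (pi y).2) <= L1 * d.
  rewrite Ev.
  have T1 := Rabs_triang (- (y.2 - x.2 - 2 * omega x.1 y.1) - 2 * omega x.1 (vsub y.1 x.1) + 2 * omega (vsub y.1 x.1) v') (2 * omega x.1 (vsub v' v)).
  have T2 := Rabs_triang (- (y.2 - x.2 - 2 * omega x.1 y.1) - 2 * omega x.1 (vsub y.1 x.1)) (2 * omega (vsub y.1 x.1) v').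
  have T3 := Rabs_triang (- (y.2 - x.2 - 2 * omega x.1 y.1)) (- (2 * omega x.1 (vsub y.1 x.1))).
  rewrite /Rminus in T1 T2 T3 H2 *.
  rewrite !Rabs_Ropp !Rabs2 in T1 T2 T3.
  have Hdd : d * d <= 2 * B * d by nra.
  rewrite /L1. nra.
have HL1 : 0 <= L1 by rewrite /L1 /B; nra.
rewrite /dE.
rewrite -(sqrt_square ((1 + L1) * d)); last nra.
apply: sqrt_le_1_alt.
have : ((pi x).2 - (pi y).2) ^ 2 <= (L1 * d) * (L1 * d).
  have -> : ((pi x).2 - (pi y).2) ^ 2 = Rabs ((pi x).2 - (pi y).2) * Rabs ((pi x).2 - (pi y).2).
    rewrite sqabs; ring.
  have := Rabs_pos ((pi x).2 - (pi y).2). nra.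
nra.
Qed.

End Decomp.

Lemma grid1 (N : nat) lo dl x : 0 < dl -> lo <= x -> x <= lo + INR N * dl ->
  exists j : nat, (j <= N)%coq_nat /\ Rabs (x - (lo + INR j * dl)) <= dl.
Proof.
move=> Hd; elim: N => [|N IH] H1 H2.
- exists 0%nat; split; first lia. rewrite /= in H2 *.
  rewrite Rabs_right; lra.
- rewrite S_INR in H2.
  case: (Rle_lt_dec x (lo + INR N * dl)) => Hx.
  + have [j [Hj Hj']] := IH H1 Hx. exists j; split => //; lia.
  + exists N; split; first lia. rewrite Rabs_right; lra.
Qed.

Lemma In_mem (T : eqType) (x : T) (s : list T) : x \in s -> In x s.
Proof.
elim: s => [|a s IH] //=.
rewrite in_cons => /orP [/eqP ->|H]; [by left | right; exact: IH].
Qed.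

Lemma length_size (T : Type) (s : list T) : length s = size s.
Proof. by elim: s => [|a s IH] //=; rewrite IH. Qed.

Definition tuples (k N : nat) : list ('I_k -> nat) :=
  List.map (fun f : {ffun 'I_k -> 'I_N.+1} => fun i => nat_of_ord (f i))
    (enum {ffun 'I_k -> 'I_N.+1}).

Lemma expn_pow m k : expn m k = Nat.pow m k.
Proof. elim: k => [|k IH] //; rewrite expnS IH //. Qed.

Lemma tuples_length k N : length (tuples k N) = Nat.pow N.+1 k.
Proof.
rewrite /tuples length_map length_size -cardE card_ffun !card_ord expn_pow //.
Qed.

Lemma tuples_cover k N (f : 'I_k -> nat) : (forall i, (f i <= N)%coq_nat) ->
  exists g, In g (tuples k N) /\ forall i, g i = f i.
Proof.
move=> Hf.
exists (fun i => nat_of_ord ([ffun i => (inord (f i) : 'I_N.+1)] i)).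
split.
- rewrite /tuples. apply: in_map. apply: In_mem. by rewrite mem_enum.
- move=> i; rewrite ffunE inordK //. apply/leP. have := Hf i. lia.
Qed.

Lemma rsumE (m : nat) (f : 'I_m -> R) : rsum f = (\sum_(i < m) f i)%R.
Proof. reflexivity. Qed.

Lemma left_inv (m k : nat) (b : 'I_k -> vec m) :
  (forall c, lincomb c b = @vzero m -> forall i, c i = 0) ->
  exists D : 'I_m -> 'I_k -> R,
    forall c i, c i = rsum (fun j => lincomb c b j * D j i).
Proof.
move=> Hind.
pose B := ((\matrix_(i < k, j < m) b i j)%R : 'M[R]_(k, m)).
have fr : row_free B.
  apply: inj_row_free => v Hv.
  apply/matrixP => i0 i.
  rewrite (ord1 i0) mxE.
  apply: (Hind (fun i => v ord0 i)).
  apply: functional_extensionality => j.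
  transitivity ((v *m B)%R ord0 j); last by rewrite Hv mxE.
  rewrite !mxE /lincomb rsumE.
  apply: eq_bigr => i1 _; by rewrite mxE.
case/row_freeP: fr => Dm HD.
exists (fun j i => Dm j i) => c i.
pose rc := ((\row_(i < k) c i)%R : 'rV[R]_k).
have E1 : c i = (rc *m B *m Dm)%R ord0 i.
  by rewrite -mulmxA HD mulmx1 mxE.
rewrite E1 mxE rsumE.
apply: eq_bigr => j _; congr (_ * _)%R.
rewrite mxE /lincomb rsumE; apply: eq_bigr => i1 _; by rewrite !mxE.
Qed.

Lemma count_bound (k : nat) (Nc Ns : nat) A1 A2 r : 0 < r -> r < 1 ->
  0 <= A1 -> 0 <= A2 ->
  INR Nc + 1 <= A1 / r -> INR Ns + 1 <= A2 / r ->
  INR (Nat.mul (Nat.pow Nc.+1 k) Ns.+1) <= A1 ^ k * A2 * Rpower r (- INR (k + 1)).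
Proof.
move=> Hr Hr1 HA1 HA2 H1 H2.
rewrite mult_INR pow_INR !S_INR Rpower_Ropp Rpower_pow //.
have P1 : (INR Nc + 1) ^ k <= (A1 / r) ^ k.
  apply: pow_incr; split => //; have := pos_INR Nc; lra.
have E : A1 ^ k * A2 * / r ^ (k + 1) = (A1 / r) ^ k * (A2 / r).
  rewrite /Rdiv Rpow_mult_distr pow_inv pow_add /=.
  field; split; [lra | apply: pow_nonzero; lra].
rewrite E.
apply: Rmult_le_compat => //.
- apply: pow_le; have := pos_INR Nc; lra.
- have := pos_INR Ns; lra.
Qed.

Lemma div_shift a r : 0 < r -> r < 1 -> a / r + 2 <= (a + 2) / r.
Proof.
move=> H1 H2.
have -> : (a + 2) / r = a / r + 2 / r by field; lra.
have : 2 <= 2 / r.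
  apply: (Rmult_le_reg_r r) => //. have -> : 2 / r * r = 2 by field; lra. lra.
lra.
Qed.

Lemma divnn a r : 0 <= a -> 0 < r -> 0 <= a / r.
Proof. move=> Ha Hr; apply: Rmult_le_pos => //; apply: Rlt_le; exact: Rinv_0_lt_compat. Qed.

Lemma Rpower_pos x y : 0 <= Rpower x y.
Proof. rewrite /Rpower; apply: Rlt_le; exact: exp_pos. Qed.

Lemma sq_lt_of_sqrt X r : 0 <= X -> sqrt X < r -> X <= r * r.
Proof.
move=> HX H. have := sqrt_pos X. have := sqrt_sqrt X HX. nra.
Qed.

Section Cover.
Variables (n k : nat) (V : vec (n + n) -> Prop) (pi : hpt n -> hpt n).
Variables (b : 'I_k -> vec (n + n)) (Dinv : 'I_(n + n) -> 'I_k -> R).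
Hypothesis HV : is_subspace V.
Hypothesis HI : isotropic V.
Hypothesis HP : is_Vperp_projection V pi.
Hypothesis Hspan : forall v, V v <-> exists c : 'I_k -> R, v = lincomb c b.
Hypothesis HD : forall c i, c i = rsum (fun j => lincomb c b j * Dinv j i).

Lemma cover_main (K : hpt n -> Prop) M : 0 <= M -> (forall x, K x -> Fb x <= M) ->
  exists C r0, 1 <= C /\ 0 < r0 /\
    forall w r, 0 < r -> r < r0 ->
      exists l : list (hpt n),
        INR (length l) <= C * Rpower r (- INR (k + 1)) /\
        forall x, K x -> dE (pi x) w < r -> exists y, In y l /\ dH x y < C * r.
Proof.
move=> HM HKM.
have Hbeta : forall j i, Rabs (Dinv j i) <= rsum (fun j => rsum (fun i => Rabs (Dinv j i))).
  move=> j i.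
  have H1 := @term_le _ (fun j => rsum (fun i => Rabs (Dinv j i))) j
     (fun j' => rsum_nonneg (fun i' => Rabs_pos _)).
  have H2 := @term_le _ (fun i => Rabs (Dinv j i)) i (fun i' => Rabs_pos _).
  simpl in H1, H2. lra.
have Hbeta0 : 0 <= rsum (fun j => rsum (fun i => Rabs (Dinv j i))).
  apply: rsum_nonneg => i; apply: rsum_nonneg => j; exact: Rabs_pos.
set beta := rsum (fun j => rsum (fun i => Rabs (Dinv j i))) in Hbeta Hbeta0.
have HBb : forall i j, Rabs (b i j) <= rsum (fun i => rsum (fun j => Rabs (b i j))).
  move=> i j.
  have H1 := @term_le _ (fun i => rsum (fun j => Rabs (b i j))) i
     (fun i' => rsum_nonneg (fun j' => Rabs_pos _)).
  have H2 := @term_le _ (fun j => Rabs (b i j)) j (fun j' => Rabs_pos _).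
  simpl in H1, H2. lra.
have HBb0 : 0 <= rsum (fun i => rsum (fun j => Rabs (b i j))).
  apply: rsum_nonneg => i; apply: rsum_nonneg => j; exact: Rabs_pos.
set Bb := rsum (fun i => rsum (fun j => Rabs (b i j))) in HBb HBb0.
set N2 := INR (n + n).
have HN2 : 0 <= N2 by apply: pos_INR.
have Hn : 0 <= INR n by apply: pos_INR.
have Hk : 0 <= INR k by apply: pos_INR.
set Mc := N2 * (M * beta).
have HMc : 0 <= Mc by rewrite /Mc; have := Rmult_le_pos _ _ HM Hbeta0; nra.
set Q := INR k * Bb + 1.
have HQ : 1 <= Q by rewrite /Q; nra.
set Bv := 1 + 4 * INR n * (3 * M + 1).
have HBv : 1 <= Bv by rewrite /Bv; nra.
set A1 := 2 * Mc * Q + 2.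
set A2 := 2 * Bv + 2.
have HA1 : 0 <= A1 by rewrite /A1; nra.
have HA2 : 0 <= A2 by rewrite /A2; nra.
have HA12 : 0 <= A1 ^ k * A2 by apply: Rmult_le_pos => //; apply: pow_le.
exists (A1 ^ k * A2 + 2 * (2 * N2 + 1) + 2), 1.
split; first lra. split; first lra.
move=> w r Hr Hr1.
set dc := r / Q.
have Hdc : 0 < dc by rewrite /dc; apply: Rdiv_lt_0_compat; lra.
have [Nc [HNc1 HNc2]] : exists Nc : nat, 2 * Mc / dc <= INR Nc /\ INR Nc <= 2 * Mc / dc + 1.
  apply: nat_between; apply: divnn => //; lra.
have [Ns [HNs1 HNs2]] : exists Ns : nat, 2 * Bv / r <= INR Ns /\ INR Ns <= 2 * Bv / r + 1.
  apply: nat_between; apply: divnn => //; lra.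
set Gf := fun f : 'I_k -> nat => lincomb (fun i => - Mc + INR (f i) * dc) b.
set sig := fun j : nat => - (Bv * r) + INR j * (r * r).
set ypt := fun p : ('I_k -> nat) * nat =>
  ((vadd w.1 (Gf p.1), w.2 + 2 * omega w.1 (Gf p.1) - sig p.2) : hpt n).
exists (List.map ypt (list_prod (tuples k Nc) (List.seq 0 Ns.+1))).
split.
  rewrite length_map length_prod tuples_length length_seq.

  apply: Rle_trans (@count_bound k Nc Ns A1 A2 r Hr Hr1 HA1 HA2 _ _) _.
  - have E : 2 * Mc / dc = 2 * Mc * Q / r by rewrite /dc; field; lra.
    rewrite E in HNc2. have := div_shift (2 * Mc * Q) Hr Hr1. rewrite /A1. lra.
  - have := div_shift (2 * Bv) Hr Hr1. rewrite /A2. lra.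
  - apply: Rmult_le_compat_r; first exact: Rpower_pos. lra.
move=> x Kx Hxw.
have [_ [Cx [Ax Nx]]] := Fb_facts (HKM x Kx).
have [v [Hv [E1 [E2 Ha]]]] := decomp HP x.
have [Na Nv] := decomp_norm Hv E1 Ha.
move: E1 E2 Ha Na Nv Hxw.
set a := pi x => E1 E2 Ha Na Nv Hxw.
have Ca : forall j, Rabs (a.1 j) <= M by move=> j; apply: coord_le_norm => //; lra.
have Cv : forall j, Rabs (v j) <= M by move=> j; apply: coord_le_norm => //; lra.
move: Hxw; rewrite /dE => Hxw.
have HX := sq_lt_of_sqrt (Rplus_le_le_0_compat _ _ (norm2_nonneg (vsub a.1 w.1)) (pow2_ge_0 (a.2 - w.2))) Hxw.
have Caw : forall j, Rabs (vsub w.1 a.1 j) <= r.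
  move=> j; apply: coord_le_norm; first lra.
  rewrite norm2_vsub_sym; have := pow2_ge_0 (a.2 - w.2); lra.
have Aaw : Rabs (w.2 - a.2) <= r.
  apply: abs_le_of_sq; first lra. have := norm2_nonneg (vsub a.1 w.1).
  have -> : (w.2 - a.2) * (w.2 - a.2) = (a.2 - w.2) ^ 2 by ring. lra.
have [c Evc] := (proj1 (Hspan v)) Hv.
have Cc : forall i, Rabs (c i) <= Mc.
  move=> i; rewrite (HD c i) -Evc.
  apply: Rle_trans (rsum_abs _) _. rewrite /Mc /N2.
  apply: rsum_const_le => j. rewrite Rabs_mult.
  apply: Rmult_le_compat => //; exact: Rabs_pos.
have HNcdc : 2 * Mc <= INR Nc * dc.
  have -> : 2 * Mc = (2 * Mc / dc) * dc by field; lra.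
  apply: Rmult_le_compat_r; lra.
have Hex : forall i, exists j : nat, (j <= Nc)%coq_nat /\
    Rabs (c i - (- Mc + INR j * dc)) <= dc.
  move=> i; have := Cc i => Hci.
  apply: grid1 => //; move: Hci; split_Rabs; lra.
pose f := fun i => proj1_sig (constructive_indefinite_description _ (Hex i)).
have Hf : forall i, (f i <= Nc)%coq_nat /\ Rabs (c i - (- Mc + INR (f i) * dc)) <= dc.
  move=> i; exact: (proj2_sig (constructive_indefinite_description _ (Hex i))).
set g := Gf f.
have Vg : V g by apply/(proj2 (Hspan g)); exists (fun i => - Mc + INR (f i) * dc).
have Cgv : forall j, Rabs (g j - v j) <= r.
  move=> j.
  have -> : g j - v j = rsum (fun i => ((- Mc + INR (f i) * dc) - c i) * b i j).
    rewrite Evc /g /Gf /lincomb -rsum_sub; apply: rsum_ext => i; ring.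
  apply: Rle_trans (rsum_abs _) _.
  apply: Rle_trans (rsum_const_le (c := dc * Bb) _) _.
    move=> i; rewrite Rabs_mult Rabs_minus_sym.
    apply: Rmult_le_compat; [exact: Rabs_pos | exact: Rabs_pos | exact: (proj2 (Hf i)) | exact: HBb].
  have EQ : INR k * Bb = Q - 1 by rewrite /Q; ring.
  have EdQ : dc * Q = r by rewrite /dc; field; lra.
  have -> : INR k * (dc * Bb) = dc * Q - dc.
    have -> : INR k * (dc * Bb) = dc * (INR k * Bb) by ring.
    rewrite EQ; ring.
  rewrite EdQ. lra.
have Cg : forall j, Rabs (g j) <= M + r.
  move=> j; have := Cgv j; have := Cv j.
  have := Rabs_triang (g j - v j) (v j). have -> : g j - v j + v j = g j by ring. lra.
set S3 := vadd (vadd g v) a.1.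
have CS3 : forall j, Rabs (S3 j) <= 3 * M + 1.
  move=> j; rewrite /S3 /vadd.
  have := Rabs_triang (g j + v j) (a.1 j). have := Rabs_triang (g j) (v j).
  have := Cg j; have := Cv j; have := Ca j. lra.
set T := (w.2 - a.2) + 2 * omega (vsub w.1 a.1) S3.
have HT : Rabs T <= Bv * r.
  have W := omega_bound Caw CS3.
  have := Rabs_triang (w.2 - a.2) (2 * omega (vsub w.1 a.1) S3). rewrite Rabs2 -/T.
  rewrite /Bv. nra.
have HNsr : 2 * Bv * r <= INR Ns * (r * r).
  have -> : 2 * Bv * r = (2 * Bv / r) * (r * r) by field; lra.
  apply: Rmult_le_compat_r; nra.
have [js [Hjs Hjs']] : exists j : nat, (j <= Ns)%coq_nat /\
    Rabs (T - (- (Bv * r) + INR j * (r * r))) <= r * r.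
  apply: grid1; [nra | move: HT; split_Rabs; nra | move: HT; split_Rabs; nra].
have [g' [Hg' Eg']] := tuples_cover (fun i => proj1 (Hf i)).
have Eg'' : g' = f by apply: functional_extensionality.
rewrite Eg'' in Hg'.
exists (ypt (f, js)). split.
  apply: in_map. apply: in_prod => //. apply/in_seq. lia.
apply: Rle_lt_trans (_ : dH x (ypt (f, js)) <= 2 * ((2 * N2 + 1) * r)) _; last nra.
apply: dH_upper; first nra.
- have Hh : forall j, Rabs (vsub (ypt (f, js)).1 x.1 j) <= 2 * r.
    move=> j; rewrite /ypt /= E1 /vsub /vadd.
    have -> : w.1 j + Gf f j - (a.1 j + v j) = (w.1 j - a.1 j) + (g j - v j) by rewrite /g; ring.
    have := Caw j; rewrite /vsub => H1. have := Cgv j.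
    have := Rabs_triang (w.1 j - a.1 j) (g j - v j). lra.
  apply: Rle_trans (rsum_const_le (c := (2 * r) * (2 * r)) _) _.
    move=> j; rewrite -sqabs. have := Hh j; have := Rabs_pos (vsub (ypt (f, js)).1 x.1 j). nra.
  rewrite -/N2. nra.
- have Ex2 : x.2 = a.2 + 2 * omega x.1 v by rewrite E2; ring.
  have Ey : (ypt (f, js)).2 - x.2 - 2 * omega x.1 (ypt (f, js)).1 = T - sig js.
    rewrite /ypt /= -/g Ex2 /T /S3 E1.
    rewrite ?omega_addl ?omega_addr ?omega_subl ?omega_subr ?omega_addl ?omega_addr.
    rewrite ?omega_neg !omega_self (HI Hv Vg) ?(omega_anti a.1 w.1) ?(omega_anti v w.1).
    ring.
  rewrite Ey /sig. nra.
Qed.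

End Cover.

Lemma omega_zero_r n (x v : vec (n + n)) : (forall j, v j = 0) -> omega x v = 0.
Proof.
move=> H; rewrite /omega.
have -> : 0 = rsum (fun i : 'I_n => 0 * 0) by rewrite rsum_scal; ring.
apply: rsum_ext => i; rewrite !H; ring.
Qed.

Theorem proposition6p4 (n k : nat) (V : vec (n + n) -> Prop)
  (pi : hpt n -> hpt n) :
  is_subspace V -> isotropic V -> has_dim V k ->
  is_Vperp_projection V pi ->
  foliation (@dH n) (Vperp V) (@dE n) pi (INR (k + 1)).
Proof.
move=> HV HI Hdim HP.
rewrite /foliation /locally_DS_regular.
split; first by move=> x; exact: (proj1 (HP x)).
split.
  move=> w Hw. exists w.
  have [v [Hv [E1 [E2 Ha]]]] := decomp HP w.
  have Evs : vsub w.1 (pi w).1 = v.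
    apply: functional_extensionality => j; rewrite E1 /vsub /vadd; ring.
  have Hvv : inner v v = 0.
    rewrite -{1}Evs. apply: (orth_sub Hw Ha). exact: Hv.
  have Hv0 : forall j, v j = 0.
    move=> j; have := coord_sq_le v j. rewrite /norm2 Hvv. nra.
  apply: injective_projections.
  - apply: functional_extensionality => j. rewrite [in RHS]E1 /vadd Hv0; ring.
  - rewrite E2 omega_zero_r //; ring.
move=> K HK.
have [M [HM HKM]] := K_bounded HK.
split.
  exists (1 + (2 * ((1 + INR (n + n)) * (1 + 2 * M)) + 12 * INR n * M)).
  move=> x y Kx Ky. exact: (lip HV HP (HKM x Kx) (HKM y Ky)).
have [b [Hind Hspan]] := Hdim.
have [Dinv HD] := left_inv Hind.
have [C [r0 [H1 [H2 H3]]]] := cover_main HI HP Hspan HD HM HKM.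
exists C, r0; split => //; split => //.
move=> w r _; exact: H3.
Qed.
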